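(* No finite cyclic group has an $n$-power-free decomposition, for any integer $n\geqslant1$.
   Context: The power graph $\mathcal{P}(G)$ of a finite group $G$ has vertex set $G$, two distinct elements being adjacent when one is a power of the other. An $n$-power-free decomposition of $G$ ($n\geqslant1$) is a partition $G=C\uplus B_1\uplus\cdots\uplus B_n$ of $G$ into a cyclic $p$-subgroup $C$ of maximal order (for some prime $p$) and $n$ nonempty subsets $B_1,\ldots,B_n$ such that each $B_i$ is an independent set (pairwise nonadjacent vertices) of $\mathcal{P}(G)$ and $|B_i|>1$ for each $i$. *)

(* Defs.v *)
From mathcomp Require Import all_boot all_fingroup all_solvable.
Set Implicit Arguments. Unset Strict Implicit. Unset Printing Implicit Defensive.
Local Open Scope group_scope.

Section PowerGraph.
Variable gT : finGroupType.

Definition is_power (x y : gT) : Prop := exists k : nat, x = y ^+ k.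

Definition pg_adj (x y : gT) : Prop := x <> y /\ (is_power x y \/ is_power y x).

Definition pg_independent (B : {set gT}) : Prop :=
  forall x y, x \in B -> y \in B -> ~ pg_adj x y.

Definition max_cyclic_psubgroup (p : nat) (G C : {group gT}) : Prop :=
  [/\ prime p, C \subset G, cyclic C, p.-group C &
      forall D : {group gT}, D \subset G -> cyclic D -> p.-group D -> #|D| <= #|C|].

Definition power_free_decomposition (n : nat) (G C : {group gT})
    (B : 'I_n -> {set gT}) : Prop :=
  [/\ exists p, max_cyclic_psubgroup p G C,
      C :|: \bigcup_(i < n) B i = G,
      forall i, [disjoint C & B i],
      forall i j, i != j -> [disjoint B i & B j] &
      forall i, 1 < #|B i| /\ pg_independent (B i)].

Definition has_power_free_decomposition (n : nat) (G : {group gT}) : Prop :=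
  exists (C : {group gT}) (B : 'I_n -> {set gT}), power_free_decomposition G C B.

End PowerGraph.

(* Main.v *)
Require Import Defs.
From mathcomp Require Import all_boot all_fingroup all_solvable.

Theorem proposition3p5 (gT : finGroupType) (G : {group gT}) (n : nat) :
  1 <= n -> cyclic G -> ~ has_power_free_decomposition n G.
Proof.
move=> n0 /cyclicP [g defG] [C [B [_ defU disC _ hB]]].
have BG : forall i, B i \subset G.
  move=> i; rewrite -defU; apply: subset_trans (subsetUr _ _).
  exact: (bigcup_sup i).
have gG : g \in G by rewrite defG cycle_id.
case gC: (g \in C).
  have GC : G \subset C by rewrite defG cycle_subG.
  pose i0 : 'I_n := Ordinal n0.
  have [h1 _] := hB i0.
  have [y yB] : exists y, y \in B i0.
    by apply/card_gt0P; apply: ltnW.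
  have yG := subsetP (BG i0) y yB.
  by rewrite (disjointFr (disC i0) (subsetP GC y yG)) in yB.
have : g \in C :|: \bigcup_(i < n) B i by rewrite defU.
rewrite inE gC /= => /bigcupP [i _ gB].
have [h1 hind] := hB i.
have : 0 < #|B i :\ g| by rewrite (cardsD1 g) gB in h1.
move=> /card_gt0P [y]; rewrite !inE => /andP [ygne yB].
have yG := subsetP (BG i) y yB.
move: yG; rewrite defG => /cycleP [k yk].
apply: (hind y g yB gB); split.
  by apply/eqP.
by left; exists k.
Qed.
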